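(* For $\lambda\in\Lambda$ let $E_\lambda$ be a congruence on $\overline{\boldsymbol{T}(X_1,\ldots,X_n)}$, and let $E$ be the congruence generated by $\bigcup_{\lambda\in\Lambda}E_\lambda$. Let $F_1,F_2$ be congruences on $\overline{\boldsymbol{T}(X_1,\ldots,X_n)}$. Then: (1) $\boldsymbol{V}(\Delta)=\mathbb{R}^n$ and $\boldsymbol{V}\big(\overline{\boldsymbol{T}(X_1,\ldots,X_n)}\times\overline{\boldsymbol{T}(X_1,\ldots,X_n)}\big)=\varnothing$; (2) $\boldsymbol{V}(E)=\bigcap_{\lambda\in\Lambda}\boldsymbol{V}(E_\lambda)$; (3) $\boldsymbol{V}(F_1\rtimes F_2)=\boldsymbol{V}(F_1)\cup\boldsymbol{V}(F_2)$.
   Context: $\boldsymbol{T}=\mathbb{R}\cup\{-\infty\}$ with $a\oplus b=\max\{a,b\}$, $a\odot b=a+b$. $\overline{\boldsymbol{T}[X_1,\ldots,X_n]}$ is the tropical polynomial semiring modulo identifying polynomials defining the same function $\boldsymbol{T}^n\to\boldsymbol{T}$; it is cancellative and $\overline{\boldsymbol{T}(X_1,\ldots,X_n)}$ is its semifield of fractions. Each element defines a function $\mathbb{R}^n\to\boldsymbol{T}$ (quotients evaluated as differences); $-\infty$ is the constant $-\infty$, other elements are real valued. A congruence is an equivalence relation compatible with $\oplus$ and $\odot$; $\Delta$ is the diagonal (trivial congruence); the congruence generated by a set is the smallest congruence containing it. $\boldsymbol{V}(E)=\{x\in\mathbb{R}^n\mid f(x)=g(x)\ \forall(f,g)\in E\}$.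 The twisted product is $(f_1,f_2)\rtimes(g_1,g_2):=(f_1\odot g_1\oplus f_2\odot g_2,\ f_1\odot g_2\oplus f_2\odot g_1)$, and $F_1\rtimes F_2$ is the congruence generated by $\{a\rtimes b\mid a\in F_1,b\in F_2\}$. *)

(* Defs.v *)
From HB Require Import structures.
From mathcomp Require Import all_boot all_order all_algebra.
From mathcomp Require Import boolp classical_sets reals constructive_ereal.
Set Implicit Arguments. Unset Strict Implicit. Unset Printing Implicit Defensive.
Import Order.TTheory GRing.Theory Num.Theory.
Local Open Scope ring_scope.
Local Open Scope ereal_scope.
Local Open Scope classical_set_scope.

Section Tropical.
Variables (R : realType) (n : nat).

Definition point := 'I_n -> R.

(* Elements of T bar(X_1..X_n) are represented by the functions R^n -> T
   they define; T = R u {-oo} is realised inside \bar R. *)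
Definition tfun := point -> \bar R.

(* tropical polynomial functions: max over a finite list of monomials
   a (.) X^k = a + sum_i k_i x_i ; the empty list gives the constant -oo *)
Definition trop_poly (p : tfun) : Prop :=
  exists s : seq (R * ('I_n -> nat)),
    forall x : point,
      p x = \big[maxe/-oo]_(m <- s) ((m.1 + \sum_(i < n) (m.2 i)%:R * x i)%R)%:E.

(* elements of the semifield of fractions: f = p / q (evaluated as p - q),
   with q not the tropical zero (q is then real valued everywhere) *)
Definition trop_rat (f : tfun) : Prop :=
  exists p q : tfun, trop_poly p /\ trop_poly q /\
    (exists x0, q x0 <> -oo) /\ forall x, f x = p x - q x.

Definition toplus (f g : tfun) : tfun := fun x => maxe (f x) (g x).
Definition todot (f g : tfun) : tfun := fun x => f x + g x.

Definition trel := tfun -> tfun -> Prop.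

Definition is_congruence (E : trel) : Prop :=
  [/\ (forall f g, E f g -> trop_rat f /\ trop_rat g),
      (forall f, trop_rat f -> E f f),
      (forall f g, E f g -> E g f),
      (forall f g h, E f g -> E g h -> E f h) &
      (forall f g h k, E f g -> E h k ->
          E (toplus f h) (toplus g k) /\ E (todot f h) (todot g k))].

Definition gen_cong (S : trel) : trel :=
  fun f g => forall C : trel, is_congruence C ->
    (forall a b, S a b -> C a b) -> C f g.

Definition diag : trel := fun f g => trop_rat f /\ f = g.
Definition fullrel : trel := fun f g => trop_rat f /\ trop_rat g.

Definition tvar (E : trel) : set point :=
  [set x | forall f g, E f g -> f x = g x].

Definition twist_rel (F1 F2 : trel) : trel :=
  gen_cong (fun a b => exists f1 f2 g1 g2,
    [/\ F1 f1 f2, F2 g1 g2,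
        a = toplus (todot f1 g1) (todot f2 g2) &
        b = toplus (todot f1 g2) (todot f2 g1)]).

End Tropical.

(* Main.v *)
Require Import Defs.
From HB Require Import structures.
From mathcomp Require Import all_boot all_order all_algebra.
From mathcomp Require Import boolp classical_sets reals constructive_ereal.
From mathcomp Require Import lra.
Import Order.TTheory GRing.Theory Num.Theory.
Local Open Scope classical_set_scope.

Section Helpers.
Local Open Scope ring_scope.
Local Open Scope ereal_scope.

Lemma key (R : realType) (a b c d : \bar R) : a != +oo -> b != +oo -> c != +oo -> d != +oo ->
  a != b -> c != d -> maxe (a+c) (b+d) != maxe (a+d) (b+c).
Proof.
move: a b c d => [a| |] [b| |] [c| |] [d| |] //= _ _ _ _ ab cd;
  rewrite -?EFinD ?maxeNy ?maxNye ?addNye ?addeNy ?eqe //;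
  move: ab cd; rewrite !eqe => ab cd.
{ rewrite -EFin_max -EFin_max eqe.
  move: ab cd; rewrite !neq_lt => /orP[h1|h1] /orP[h2|h2].
  all: rewrite /Num.max; case: (ltrP (a+c) (b+d)) => h3; case: (ltrP (a+d) (b+c)) => h4; apply/orP; lra. }
all: apply/negP => /eqP h; first [ by move/eqP: ab; apply; lra | by move/eqP: cd; apply; lra ].
Qed.

Context {R : realType} {n : nat}.

Lemma poly_noty (p : tfun R n) x : trop_poly p -> p x != +oo.
Proof.
move=> [s Hs]; rewrite Hs; clear Hs; elim: s => [|m s IH]; first by rewrite big_nil.
by rewrite big_cons -ltey gt_max !ltey IH andbT.
Qed.

Lemma poly_nony (q : tfun R n) x : trop_poly q -> (exists x0, q x0 <> -oo) -> q x != -oo.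
Proof.
move=> [s Hs] [x0 Hx0]; rewrite Hs; move: Hs; case: s => [|m s] Hs.
  by exfalso; apply: Hx0; rewrite Hs big_nil.
by rewrite big_cons -ltNye lt_max ltNye.
Qed.

Lemma rat_noty (f : tfun R n) x : trop_rat f -> f x != +oo.
Proof.
move=> [p [q [Hp [Hq [Hq0 Hf]]]]]; rewrite Hf.
move: (@poly_noty p x Hp) (@poly_nony q x Hq Hq0).
by case: (p x) => [r| |]; case: (q x) => [s| |].
Qed.

Lemma rat_closed {C0 : trel R n} {f h : tfun R n} : is_congruence C0 -> trop_rat f -> trop_rat h ->
  trop_rat (toplus f h) /\ trop_rat (todot f h).
Proof.
move=> [H1 H2 _ _ H5] Hf Hh.
have [A B] := H5 _ _ _ _ (H2 _ Hf) (H2 _ Hh).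
by split; [exact: (H1 _ _ A).1 | exact: (H1 _ _ B).1].
Qed.

Definition Cx (x : Defs.point R n) : trel R n :=
  fun f g => [/\ trop_rat f, trop_rat g & f x = g x].

Lemma Cx_cong {C0 : trel R n} x : is_congruence C0 -> is_congruence (Cx x).
Proof.
move=> HC; split.
- by move=> f g [].
- by move=> f Hf; split.
- by move=> f g [A B E]; split.
- by move=> f g h [A B E1] [C D E2]; split => //; rewrite E1 E2.
- move=> f g h k [Hf Hg E1] [Hh Hk E2].
  have [A1 B1] := rat_closed HC Hf Hh.
  have [A2 B2] := rat_closed HC Hg Hk.
  by split; split => //; rewrite /toplus /todot E1 E2.
Qed.

Lemma gen_Cx {C0 : trel R n} {S : trel R n} {x} {f g : tfun R n} : is_congruence C0 ->
  (forall a b, S a b -> Cx x a b) -> gen_cong S f g -> f x = g x.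
Proof.
by move=> HC HS Hg; have [] := Hg (Cx x) (Cx_cong x HC) HS.
Qed.

Lemma const_rat (r : R) : trop_rat (fun _ : Defs.point R n => r%:E).
Proof.
have Hc : forall c : R, trop_poly (fun _ : Defs.point R n => c%:E).
  move=> c; exists [:: (c, fun _ => 0%N)] => x.
  rewrite big_cons big_nil maxeNy /= big1 ?addr0 // => i _; by rewrite mul0r.
exists (fun _ => r%:E), (fun _ => 0%:E); split; first exact: Hc.
split; first exact: Hc.
by split; [exists (fun _ => 0%R) | move=> x; rewrite sube0].
Qed.

End Helpers.

Theorem proposition3p8 (R : realType) (n : nat)
    (Lambda : Type) (Es : Lambda -> trel R n) (F1 F2 : trel R n) :
  (forall l, is_congruence (Es l)) ->
  is_congruence F1 -> is_congruence F2 ->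
  [/\ tvar (@diag R n) = setT /\ tvar (@fullrel R n) = set0,
      tvar (gen_cong (fun f g => exists l, Es l f g))
        = \bigcap_(l in [set: Lambda]) tvar (Es l) &
      tvar (twist_rel F1 F2) = tvar F1 `|` tvar F2].
Proof.
move=> HE HF1 HF2; split; [split| |].
- by apply/seteqP; split => x // _ f g [_ ->].
- apply/seteqP; split => x // Hx.
  have := Hx _ _ (conj (@const_rat R n 0%R) (@const_rat R n 1%R)).
  by move=> [] /eqP; rewrite eq_sym oner_eq0.
- apply/seteqP; split => x Hx.
  + move=> l _ f g Hfg; apply: Hx => C _ HS; apply: HS; by exists l.
  + move=> f g Hg. apply: (gen_Cx HF1 _ Hg) => a b [l Hab].
    have [H1 _ _ _ _] := HE l.
    have [Ha Hb] := H1 _ _ Hab.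
    split => //; exact: (Hx l I a b Hab).
- apply/seteqP; split => x Hx.
  + have [?|n1] := pselect (tvar F1 x); first by left.
    have [?|n2] := pselect (tvar F2 x); first by right.
    exfalso.
    move/existsNP: n1 => [f1 /existsNP [f2 /not_implyP [F1f /eqP N1]]].
    move/existsNP: n2 => [g1 /existsNP [g2 /not_implyP [F2g /eqP N2]]].
    have [A1 _ _ _ _] := HF1; have [A2 _ _ _ _] := HF2.
    have [r1 r2] := A1 _ _ F1f; have [s1 s2] := A2 _ _ F2g.
    have E := Hx (toplus (todot f1 g1) (todot f2 g2)) (toplus (todot f1 g2) (todot f2 g1))
      (fun C _ HS => HS _ _ (ex_intro _ f1 (ex_intro _ f2 (ex_intro _ g1 (ex_intro _ g2
        (And4 F1f F2g erefl erefl)))))).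
    move: E; rewrite /toplus /todot => /eqP.
    by apply/negP; apply: key => //; apply: rat_noty.
  + move=> f g Hg; apply: (gen_Cx HF1 _ Hg).
    move=> a b [f1 [f2 [g1 [g2 [F1f F2g -> ->]]]]].
    have [A1 _ _ _ _] := HF1; have [A2 _ _ _ _] := HF2.
    have [r1 r2] := A1 _ _ F1f; have [s1 s2] := A2 _ _ F2g.
    have [_ D1] := rat_closed HF1 r1 s1; have [_ D2] := rat_closed HF1 r2 s2.
    have [_ D3] := rat_closed HF1 r1 s2; have [_ D4] := rat_closed HF1 r2 s1.
    have [P1 _] := rat_closed HF1 D1 D2; have [P2 _] := rat_closed HF1 D3 D4.
    split => //.
    rewrite /toplus /todot; case: Hx => [H|H].
    * by rewrite (H _ _ F1f) maxC.
    * by rewrite (H _ _ F2g).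
Qed.
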